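(* For every integer $n\geqslant 2$ there exists a finite simple graph $G$ with $\mathrm{diam}(G)=2$ and $\mathrm{diam}(D_2(G))=n$.
   Context: All graphs are finite, simple and undirected. For a graph $G$, $\mathrm{d}_G(x,y)$ denotes the length of a shortest path between $x$ and $y$, and $\mathrm{diam}(G)$ is the maximum distance between vertices of $G$. The $2$-distance graph $D_2(G)$ of $G$ is the graph with vertex set $V(G)$ in which two vertices $x,y$ are adjacent if and only if $\mathrm{d}_G(x,y)=2$. *)

(* Defs.v *)
(* Finite simple graphs: a symmetric irreflexive relation on a finType. *)
From mathcomp Require Import all_boot.
Set Implicit Arguments. Unset Strict Implicit. Unset Printing Implicit Defensive.

Section Graphs.
Variable T : finType.

Inductive walk (r : T -> T -> Prop) : T -> T -> nat -> Prop :=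
| walk0 x : walk r x x 0
| walkS x y z k : r x y -> walk r y z k -> walk r x z k.+1.

Definition gdist (r : T -> T -> Prop) (x y : T) (d : nat) : Prop :=
  walk r x y d /\ (forall k, k < d -> ~ walk r x y k).

Definition diam_eq (r : T -> T -> Prop) (D : nat) : Prop :=
  (forall x y, exists2 d, gdist r x y d & d <= D) /\
  (exists x y, gdist r x y D).

Definition D2 (r : T -> T -> Prop) : T -> T -> Prop := fun x y => gdist r x y 2.

End Graphs.

(* Main.v *)
Require Import Defs.
From mathcomp Require Import all_boot.
From mathcomp Require Import zify.

Definition cycn (m a b : nat) : bool := (b == a.+1) || (a == b.+1) || ((a == 0) && (b == m.-1)) || ((b == 0) && (a == m.-1)).
Definition enat m a b := (a != b) && ~~ cycn m a b.
Definition cd (m a b : nat) : nat :=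
  let d := (b - a) + (a - b) in minn d (m - d).

Lemma common m a b : 5 <= m -> a < m -> b < m -> cycn m a b -> exists c, c < m /\ enat m a c /\ enat m c b.
Proof.
move=> h5 ha hb; rewrite /enat /cycn => H.
have [hc|hc] := boolP ((b == a.+1) || ((a == m.-1) && (b == 0))).
- exists (if a + 3 < m then a + 3 else a + 3 - m); case: ifP => h; split; lia.
- exists (if b + 3 < m then b + 3 else b + 3 - m); case: ifP => h; split; lia.
Qed.

Section S.
Variable T : finType.
Lemma walk0_eq (r : T -> T -> Prop) x y : walk r x y 0 -> x = y.
Proof. move=> H; inversion H; done. Qed.
Lemma walk1 (r : T -> T -> Prop) x y : walk r x y 1 -> r x y.
Proof. move=> H; inversion H; subst. inversion H4; subst; done. Qed.
Lemma walk_ext (r s : T -> T -> Prop) x y k : (forall a b, r a b -> s a b) -> walk r x y k -> walk s x y k.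
Proof. move=> hrs; elim => [a|a b c k' hab _ IH]; [constructor|]. by apply: walkS (hrs _ _ hab) IH. Qed.
Lemma walk_cat (r : T -> T -> Prop) x y z k l : walk r x y k -> walk r y z l -> walk r x z (k + l).
Proof. elim => [a|a b c k' hab _ IH] // H. by apply: walkS hab (IH H). Qed.
Lemma gdist_ext (r s : T -> T -> Prop) x y d : (forall a b, r a b <-> s a b) -> gdist r x y d -> gdist s x y d.
Proof.
move=> h [w nw]; split; first by apply: walk_ext w => a b /h //.
move=> k hk w'; apply: (nw k hk); apply: walk_ext w' => a b /h //.
Qed.
End S.

Section Main.
Variable n : nat.
Hypothesis hn : 2 <= n.
Notation m := (n + n).+1.
Notation T := 'I_m.
Definition cyc (x y : T) : bool := cycn m x y.
Definition e (x y : T) : bool := enat m x y.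

Lemma e_cyc2 (x y : T) : cyc x y -> gdist (fun a b => e a b) x y 2.
Proof.
move=> hc; split.
- have [c [hcm [h1 h2]]] := @common m x y ltac:(lia) (ltn_ord x) (ltn_ord y) hc.
  apply: (walkS (y:=inord c)); first by rewrite /e inordK.
  apply: (walkS (y:=y)); first by rewrite /e inordK.
  constructor.
- move=> k hk; case: k hk => [|[|]] // _.
  + move/walk0_eq => exy; move: hc; rewrite exy /cyc /cycn; lia.
  + move/walk1; move: hc; rewrite /e /cyc /enat; lia.
Qed.

Lemma D2_cyc (x y : T) : D2 (fun a b => e a b) x y <-> cyc x y.
Proof.
split; last exact: e_cyc2.
move=> [_ nw]; case hc: (cyc x y) => //; exfalso.
have [exy|nxy] := eqVneq x y.
  by apply: (nw 0) => //; rewrite exy; constructor.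
apply: (nw 1) => //; apply: (walkS (y:=y)); last constructor.
by move: hc; rewrite /= /e /enat /cyc nxy => ->.
Qed.

Lemma cd_walk_lb (x y : T) k : walk (fun a b => cyc a b) x y k -> cd m x y <= k.
Proof.
elim => [a|a b c k' hab _ IH]; first by rewrite /cd; lia.
move: hab IH; rewrite /cyc /cycn /cd; have := ltn_ord a; have := ltn_ord b; have := ltn_ord c; lia.
Qed.

Lemma walk_up k (x : T) : x + k < m -> walk (fun a b => cyc a b) x (inord (x + k)) k.
Proof.
elim: k x => [|k IH] x hx; first by rewrite addn0 inord_val; constructor.
have hx1 : x.+1 < m by lia.
apply: (walkS (y := Ordinal hx1)); first by rewrite /cyc /cycn /=; lia.
have -> : x + k.+1 = (Ordinal hx1) + k by rewrite /=; lia.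
by apply: IH => /=; lia.
Qed.

Lemma walk_down k (x : T) : k <= x -> walk (fun a b => cyc a b) x (inord (x - k)) k.
Proof.
elim: k x => [|k IH] x hx; first by rewrite subn0 inord_val; constructor.
have hx1 : x.-1 < m by have := ltn_ord x; lia.
apply: (walkS (y := Ordinal hx1)); first by rewrite /cyc /cycn /=; lia.
have -> : x - k.+1 = (Ordinal hx1) - k by rewrite /=; lia.
by apply: IH => /=; lia.
Qed.

Lemma inord_nat (v : nat) (x : T) : v = x -> inord v = x.
Proof. by move=> ->; rewrite inord_val. Qed.

Lemma cd_walk (x y : T) : walk (fun a b => cyc a b) x y (cd m x y).
Proof.
have hx := ltn_ord x; have hy := ltn_ord y.
have top : (n + n) < m by [].
have bot : 0 < m by [].
have stepTB : cyc (Ordinal top) (Ordinal bot) by rewrite /cyc /cycn /=; lia.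
have stepBT : cyc (Ordinal bot) (Ordinal top) by rewrite /cyc /cycn /=; lia.
case: (leqP x y) => hxy.
- case: (leqP (y - x) (m - (y - x))) => hd.
  + have -> : cd m x y = y - x by rewrite /cd; lia.
    have := walk_up (y - x) (x) ltac:(lia).
    by rewrite (@inord_nat _ (y)) //; lia.
  + have -> : cd m x y = x + (1 + (n + n - y)) by rewrite /cd; lia.
    apply: (@walk_cat _ _ _ (Ordinal bot)).
      have := walk_down (x) (x) (leqnn _).
      by rewrite (@inord_nat _ (Ordinal bot)) //=; lia.
    apply: (walkS (y := Ordinal top)) => //.
    have := walk_down (n + n - y) (Ordinal top) ltac:(rewrite /=; lia).
    by rewrite (@inord_nat _ (y)) //=; lia.
- case: (leqP (x - y) (m - (x - y))) => hd.
  + have -> : cd m x y = x - y by rewrite /cd; lia.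
    have := walk_down (x - y) (x) ltac:(lia).
    by rewrite (@inord_nat _ (y)) //; lia.
  + have -> : cd m x y = (n + n - x) + (1 + y) by rewrite /cd; lia.
    apply: (@walk_cat _ _ _ (Ordinal top)).
      have := walk_up (n + n - x) (x) ltac:(lia).
      by rewrite (@inord_nat _ (Ordinal top)) //=; lia.
    apply: (walkS (y := Ordinal bot)) => //.
    have := walk_up (y) (Ordinal bot) ltac:(rewrite /=; lia).
    by rewrite (@inord_nat _ (y)) //=; lia.
Qed.

Lemma cd_gdist (x y : T) : gdist (fun a b => cyc a b) x y (cd m x y).
Proof.
split; first exact: cd_walk.
move=> k hk /cd_walk_lb; lia.
Qed.

End Main.


Theorem mainTheorem1 (n : nat) (hn : 2 <= n) :
  exists (T : finType) (e : rel T),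
    [/\ symmetric e, irreflexive e,
        diam_eq (fun x y => e x y) 2 &
        diam_eq (D2 (fun x y => e x y)) n].
Proof.
exists [the finType of 'I_(n + n).+1], (@e n); split.
- by move=> x y; rewrite /e /enat /cycn; lia.
- by move=> x; rewrite /e /enat eqxx.
- split.
  + move=> x y.
    have [exy|nxy] := eqVneq x y.
      by exists 0 => //; split => //; rewrite exy; constructor.
    case hxy: (e n x y).
      exists 1 => //; split; first by apply: (@walkS _ _ x y y 0); [rewrite /= hxy | constructor].
      by case=> // _ /walk0_eq; move/eqP: nxy.
    exists 2 => //; apply: e_cyc2 => //.
    by move: hxy; rewrite /e /enat /cyc nxy /= => /negbFE.
  + have h0 : 0 < (n + n).+1 by [].
    have h1 : 1 < (n + n).+1 by lia.
    exists (Ordinal h0), (Ordinal h1); apply: e_cyc2 => //.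
- split.
  + move=> x y; exists (cd (n + n).+1 x y).
      apply: (@gdist_ext _ _ _ _ _ _ _ (cd_gdist n hn x y)) => a b; exact: iff_sym (D2_cyc n hn a b).
    by rewrite /cd; have := ltn_ord x; have := ltn_ord y; lia.
  + have h0 : 0 < (n + n).+1 by [].
    have h1 : n < (n + n).+1 by lia.
    exists (Ordinal h0), (Ordinal h1).
    have G := cd_gdist n hn (Ordinal h0) (Ordinal h1).
    have E : cd (n + n).+1 (Ordinal h0) (Ordinal h1) = n by rewrite /cd /=; lia.
    rewrite E in G.
    apply: (@gdist_ext _ _ _ _ _ _ _ G) => a b; exact: iff_sym (D2_cyc n hn a b).
Qed.
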